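(* Let $\kappa\ge1$, $n\ge1$ be integers and $0<\epsilon<1$. Let $\bar q\in\mathbb{R}^{2^\kappa}$ be given by $\bar q_0=0$ and $\bar q_i=\frac{1}{2^\kappa-1}$ for $1\le i\le2^\kappa-1$. Then $\lambda(n,\epsilon,\bar q)\le\lambda(n,\epsilon,q)$ for every $q\in\mathbb{R}^{2^\kappa}$ with $q_i\ge0$ for all $i$ and $\sum_{i=0}^{2^\kappa-1}q_i=1$.
   Context: $W=\mathbb{F}_2^\kappa$; $\nu(i)\in W$ is the binary expansion of $i\in\{0,\dots,2^\kappa-1\}$; vectors $q$ are indexed $q_0,\dots,q_{2^\kappa-1}$. For a subspace $S\subseteq W$, $\zeta(S,q)=\sum_{i:\nu(i)\in S}q_i$; $\Xi(W,\kappa-1)$ is the set of $(\kappa-1)$-dimensional subspaces of $W$. For real $q$ define $\lambda(n,\epsilon,q)=(2-\epsilon)^n2^{-\kappa}\Big(1+\sum_{S\in\Xi(W,\kappa-1)}\big(\tfrac{\epsilon}{2-\epsilon}\big)^{n(1-\zeta(S,q))}\Big)-1$ (for $q$ the column-distribution vector of a generator matrix, this is the $\chi^2$ divergence between $p_{MZ}$ and $p_Mp_Z$ for the coset code over a binary erasure channel with erasure probability $\epsilon$). *)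

(* Defs.v *)
From HB Require Import structures.
From mathcomp Require Import all_boot all_order all_algebra.
From mathcomp Require Import all_classical all_reals.
From mathcomp Require Import exp.
Set Implicit Arguments. Unset Strict Implicit. Unset Printing Implicit Defensive.
Import Order.TTheory GRing.Theory Num.Theory.
Local Open Scope ring_scope.

Definition W (kappa : nat) := 'rV['F_2]_kappa.

Definition nu (kappa : nat) (i : nat) : W kappa :=
  \row_(j < kappa) ((odd (i %/ 2 ^ j))%:R : 'F_2).

(* Subspaces of W are represented by their canonical square matrix <<A>>%MS
   (row space); distinct subspaces have distinct representatives. *)
Definition Xi (kappa d : nat) : {set 'M['F_2]_kappa} :=
  [set (<<A>>)%MS | A in [pred A : 'M['F_2]_kappa | \rank A == d]].

Definition in_sub (kappa : nat) (v : W kappa) (S : 'M['F_2]_kappa) : bool :=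
  (v <= S)%MS.

Definition zeta (R : realType) (kappa : nat) (S : 'M['F_2]_kappa)
  (q : 'I_(2 ^ kappa) -> R) : R :=
  \sum_(i < 2 ^ kappa | in_sub (nu kappa i) S) q i.

Definition lambda (R : realType) (kappa n : nat) (eps : R)
  (q : 'I_(2 ^ kappa) -> R) : R :=
  (2 - eps) ^+ n * (2 ^+ kappa)^-1 *
    (1 + \sum_(S in Xi kappa kappa.-1)
           powR (eps / (2 - eps)) (n%:R * (1 - zeta S q))) - 1.

Definition qbar (R : realType) (kappa : nat) : 'I_(2 ^ kappa) -> R :=
  fun i => if val i == 0%N then 0 else ((2 ^ kappa)%:R - 1)^-1.

Arguments lambda {R} kappa n eps q.
Arguments zeta {R} kappa S q.
Arguments qbar R kappa _ : clear implicits.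

(* Main.v *)
Require Import Defs.
From HB Require Import structures.
From mathcomp Require Import all_boot all_order all_algebra.
From mathcomp Require Import all_classical all_reals sequences exp.
From mathcomp Require Import zify ring lra.
Import Order.TTheory GRing.Theory Num.Theory.
Local Open Scope ring_scope.
Set Implicit Arguments. Unset Strict Implicit.

Lemma F2_cases (a : 'F_2) : a = 0 \/ a = 1.
Proof. case: a => [[|[|//]]] /= H; [left|right]; exact/val_inj. Qed.

Lemma F2_11 : (1 + 1 : 'F_2) = 0.
Proof. exact/val_inj. Qed.

Lemma mx11_eq0 (M : 'M['F_2]_1) : (M == 0) = (M 0 0 == 0).
Proof.
apply/eqP/eqP => [->|H]; first by rewrite mxE.
by apply/matrixP => i j; rewrite !ord1 H mxE.
Qed.

Lemma delta_mulT k (j : 'I_k) (w : 'rV['F_2]_k) : (delta_mx (0:'I_1) j *m w^T) 0 0 = w 0 j.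
Proof. by rewrite -rowE !mxE. Qed.

Lemma card_W k : #|{: 'rV['F_2]_k}| = (2 ^ k)%N.
Proof. by rewrite card_mx card_Fp // mul1n. Qed.

Lemma half_count k (w : 'rV['F_2]_k) : w != 0 ->
  (2 * #|[set x : 'rV['F_2]_k | x *m w^T == 0%R]| = 2 ^ k)%N.
Proof.
move=> wn0.
have [j wj] : exists j, w 0 j = 1.
  case: (pickP (fun j => w 0 j != 0)) => [j /eqP H|H].
    by exists j; case: (F2_cases (w 0 j)).
  by move: wn0; case/negP; apply/eqP/rowP => j; rewrite mxE; move: (H j) => /= /negbFE/eqP.
pose t : 'rV['F_2]_k -> 'rV['F_2]_k := fun x => x + delta_mx 0 j.
have tE x : (t x *m w^T) 0 0 = (x *m w^T) 0 0 + 1.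
  by rewrite /t mulmxDl mxE delta_mulT wj.
have tinj : injective t by move=> x y; apply: addIr.
set P := [set x | _].
have key (A B : {set 'rV['F_2]_k}) : {in A, forall x, t x \in B} -> (#|A| <= #|B|)%N.
  move=> H; rewrite -(card_imset A tinj); apply: subset_leq_card.
  by apply/fintype.subsetP => y /imsetP [x xA ->]; apply: H.
have e1 : #|P| = #|~: P|.
  apply/eqP; rewrite eqn_leq; apply/andP; split; apply: key => x;
  rewrite !inE !mx11_eq0 tE.
    by move/eqP->; rewrite add0r.
  by case: (F2_cases ((x *m w^T) 0 0)) => ->; rewrite ?F2_11.
by rewrite mul2n -addnn {2}e1 cardsC card_W.
Qed.

Lemma bits_inj k : forall i j, (i < 2^k)%N -> (j < 2^k)%N ->
  (forall l, (l < k)%N -> odd (i %/ 2^l) = odd (j %/ 2^l)) -> i = j.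
Proof.
elim: k => [|k IH] i j.
  by rewrite expn0 !ltnS !leqn0 => /eqP -> /eqP ->.
move=> hi hj H.
have h0 := H 0%N (ltn0Sn _); rewrite expn0 !divn1 in h0.
have e : i./2 = j./2.
  apply: IH.
  - by rewrite -divn2 ltn_divLR // mulnC -expnS.
  - by rewrite -divn2 ltn_divLR // mulnC -expnS.
  move=> l hl; have := H l.+1 hl.
  by rewrite expnS !divnMA !divn2.
by rewrite -(odd_double_half i) -(odd_double_half j) h0 e.
Qed.

Lemma nat2F_inj (b c : bool) : (b%:R : 'F_2) = c%:R -> b = c.
Proof. by case: b; case: c => // /(congr1 val). Qed.

Lemma nu_inj k : injective (fun i : 'I_(2^k) => (nu k i : 'rV['F_2]_k)).
Proof.
move=> i j /= e; apply: val_inj; apply: (@bits_inj k _ _ (ltn_ord i) (ltn_ord j)).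
move=> l hl; have := congr1 (fun v : 'rV['F_2]_k => v 0 (Ordinal hl)) e.
by rewrite /nu !mxE => /nat2F_inj.
Qed.

Lemma nu0 k : nu k 0 = 0.
Proof. by apply/rowP => j; rewrite !mxE div0n. Qed.

Lemma nu_surj k (x : 'rV['F_2]_k) : exists i : 'I_(2^k), x = nu k i.
Proof.
have e : (fun i : 'I_(2^k) => (nu k i : 'rV['F_2]_k)) @: [set: 'I_(2^k)] = [set: 'rV['F_2]_k].
  apply/eqP; rewrite eqEcard finset.subsetT /= card_imset; last exact: nu_inj.
  by rewrite !cardsT card_W card_ord.
have : x \in (fun i : 'I_(2^k) => (nu k i : 'rV['F_2]_k)) @: [set: 'I_(2^k)] by rewrite e inE.
by case/imsetP => i _ ->; exists i.
Qed.

Lemma card_nu k (P : pred 'rV['F_2]_k) :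
  #|[set i : 'I_(2^k) | P (nu k i)]| = #|[set x | P x]|.
Proof.
rewrite -(card_imset _ (@nu_inj k)); apply: eq_card => x.
rewrite inE; apply/imsetP/idP => [[i]|Px]; first by rewrite inE => ? ->.
by have [i ei] := nu_surj x; exists i; rewrite // inE -ei.
Qed.

Definition H k (w : 'rV['F_2]_k) : 'M['F_2]_k := (<<kermx w^T>>)%MS.

Lemma in_H k (x w : 'rV['F_2]_k) : in_sub x (H w) = (x *m w^T == 0).
Proof. by rewrite /in_sub /H genmxE sub_kermx. Qed.

Lemma H_inj k : injective (@H k).
Proof.
move=> w1 w2 e; apply/rowP => j.
have := in_H (delta_mx 0 j) w1; rewrite e in_H !mx11_eq0 !delta_mulT.
by case: (F2_cases (w1 0 j)) => ->; case: (F2_cases (w2 0 j)) => -> //; rewrite eqxx.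
Qed.

Lemma Xi_eq k : (1 <= k)%N -> Xi k k.-1 = @H k @: [set w : 'rV['F_2]_k | w != 0].
Proof.
move=> hk; apply/setP => S; apply/imsetP/imsetP.
- case=> A; rewrite inE => /eqP rA ->.
  have kk : (k - k.-1 = 1)%N by case: (k) hk => // k0 _; rewrite subSnn.
  have := mulmx_coker A; have := mxrank_coker A; move: (cokermx A) => C.
  rewrite rA kk => rC AC.
  have [i [j Cij]] : exists i j, C i j != 0.
    case: (pickP (fun ij : 'I_k * 'I_k => C ij.1 ij.2 != 0)) => [[i j] H1|H1].
      by exists i, j.
    have C0 : C = 0 by apply/matrixP => i j; move: (H1 (i, j)) => /= /negbFE/eqP ->; rewrite mxE.
    by move: rC; rewrite C0 mxrank0.
  pose w : 'rV['F_2]_k := \row_l C l j.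
  have wn0 : w != 0.
    by apply/negP => /eqP /rowP /(_ i); rewrite !mxE => e; rewrite e eqxx in Cij.
  exists w; first by rewrite inE.
  have sA : (A <= kermx w^T)%MS.
    rewrite sub_kermx; apply/eqP/matrixP => a b.
    have e := congr1 (fun M : 'M_k => M a j) AC; rewrite /= !mxE in e.
    rewrite [X in _ = X]mxE -e mxE; apply: eq_bigr => l _; by rewrite !mxE.
  have rk : \rank (kermx w^T) = k.-1.
    by rewrite mxrank_ker mxrank_tr rank_rV wn0 subn1.
  have sB : (kermx w^T <= A)%MS.
    by rewrite -(geq_leqif (mxrank_leqif_sup sA)) rk rA.
  by rewrite /H; apply: eq_genmx; apply/eqmxP; rewrite /eqmx sA sB.
- case=> w; rewrite inE => wn0 ->.
  exists (kermx w^T) => //; rewrite inE mxrank_ker mxrank_tr rank_rV wn0 subn1.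
  by [].
Qed.

Lemma half_count' k (w : 'rV['F_2]_k) : (1 <= k)%N -> w != 0 ->
  #|[set x : 'rV['F_2]_k | x *m w^T == 0%R]| = (2 ^ k.-1)%N.
Proof.
move=> hk wn0; have := half_count wn0.
have e2 : (2^k = 2 * 2^k.-1)%N by rewrite -expnS prednK.
rewrite e2 => /eqP; rewrite eqn_pmul2l //; exact/eqP.
Qed.

Lemma zz_sym k (x w : 'rV['F_2]_k) : (x *m w^T == 0) = (w *m x^T == 0).
Proof.
apply/eqP/eqP => e.
  by rewrite -[LHS]trmxK trmx_mul trmxK e trmx0.
by rewrite -[LHS]trmxK trmx_mul trmxK e trmx0.
Qed.

Lemma card_nz k (P : pred 'rV['F_2]_k) : P 0 ->
  #|[set w | (w != 0) && P w]| = #|[set w | P w]|.-1.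
Proof.
move=> P0; rewrite (cardsD1 0 [set w | P w]) inE P0 /=.
by apply: eq_card => w; rewrite !inE.
Qed.

Lemma sum_const_set (R : realType) (I : finType) (P : pred I) (x : R) :
  \sum_(i | P i) x = x *+ #|[set i | P i]|.
Proof. rewrite -sumr_const; apply: eq_bigl => i; by rewrite inE. Qed.

Lemma sum_nat_ind (R : realType) (I : finType) (P Q : pred I) :
  \sum_(i | P i) ((Q i)%:R : R) = (#|[set i | P i && Q i]|)%:R.
Proof.
rewrite (bigID Q) /= [X in _ + X]big1; last by move=> i /andP [_ /negbTE ->].
rewrite addr0 (eq_bigr (fun=> 1)); last by move=> i /andP [_ ->].
by rewrite sum_const_set.
Qed.

Lemma nu_eq0 k (i : 'I_(2^k)) : (nu k i == 0 :> 'rV['F_2]_k) = (val i == 0%N).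
Proof.
have z : (0 < 2^k)%N by rewrite expn_gt0.
apply/eqP/eqP => [e|e]; last by rewrite /= e nu0.
by have := @nu_inj k i (Ordinal z); rewrite /= e nu0 => /(_ erefl) ->.
Qed.

Definition zz k (w : 'rV['F_2]_k) (i : 'I_(2^k)) := ((nu k i : 'rV['F_2]_k) *m w^T == 0).

Lemma card_zz k (w : 'rV['F_2]_k) : (1 <= k)%N -> w != 0 ->
  #|[set i | zz w i && (val i != 0%N)]| = (2^k.-1).-1.
Proof.
move=> hk wn0.
have := card_nu (fun x : 'rV['F_2]_k => (x != 0) && (x *m w^T == 0)).
rewrite card_nz ?mul0mx // half_count' // => <-.
by apply: eq_card => i; rewrite !inE /zz -nu_eq0 andbC.
Qed.

Lemma card_zz2 k (i : 'I_(2^k)) : (1 <= k)%N ->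
  ((2^k.-1).-1 <= #|[set w | (w != 0%R) && zz w i]|)%N.
Proof.
move=> hk; case: (eqVneq (val i) 0%N) => i0.
  have e : forall w : 'rV['F_2]_k, zz w i.
    by move=> w; rewrite /zz; move/eqP: i0; rewrite -nu_eq0 => /eqP ->; rewrite mul0mx.
  rewrite (eq_card (B := [set w : 'rV['F_2]_k | (w != 0) && true])); last first.
    by move=> w; rewrite !inE e.
  rewrite card_nz // cardsT card_W.
  have : (2^k.-1 <= 2^k)%N by rewrite leq_pexp2l // leq_pred.
  lia.
have xn0 : (nu k i : 'rV['F_2]_k) != 0 by rewrite nu_eq0.
rewrite (eq_card (B := [set w : 'rV['F_2]_k | (w != 0) && (w *m (nu k i : 'rV['F_2]_k)^T == 0)])); last first.
  by move=> w; rewrite !inE /zz zz_sym.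
by rewrite card_nz ?mul0mx // half_count'.
Qed.

Theorem theorem7 (R : realType) (kappa n : nat) (eps : R)
  (hk : (1 <= kappa)%N) (hn : (1 <= n)%N) (he0 : 0 < eps) (he1 : eps < 1)
  (q : 'I_(2 ^ kappa) -> R)
  (hq0 : forall i, 0 <= q i) (hq1 : \sum_(i < 2 ^ kappa) q i = 1) :
  lambda kappa n eps (qbar R kappa) <= lambda kappa n eps q.
Proof.
have h2 : 0 < 2 - eps by lra.
set r := eps / (2 - eps).
have r0 : 0 < r by rewrite divr_gt0.
have r1 : r <= 1 by rewrite ler_pdivrMr // mul1r; lra.
set L := ln r.
have L0 : L <= 0 := ln_le0 r1.
have pE y : powR r y = expR (y * L) by rewrite /powR (gt_eqF r0).
pose Z (q' : 'I_(2^kappa) -> R) w := \sum_(i | zz w i) q' i.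
pose A := [set w : 'rV['F_2]_kappa | w != 0].
have sumE (q' : 'I_(2^kappa) -> R) :
    \sum_(S in Xi kappa kappa.-1) powR r (n%:R * (1 - zeta kappa S q'))
    = \sum_(w in A) expR (n%:R * (1 - Z q' w) * L).
  rewrite Xi_eq // big_imset /=; last by move=> x y _ _; apply: H_inj.
  apply: eq_bigr => w _.
  have ze : zeta kappa (H w) q' = Z q' w by apply: eq_bigl => i; rewrite in_H.
  by rewrite pE ze.
set a : R := ((2^kappa.-1).-1)%:R.
set d : R := ((2^kappa)%:R - 1)^-1.
set c := a * d.
have Nm : #|A| = (2^kappa).-1.
  rewrite (eq_card (B := [set w : 'rV['F_2]_kappa | (w != 0) && true])); last first.
    by move=> w; rewrite !inE andbT.
  by rewrite card_nz // cardsT card_W.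
have h2k : (1 < 2^kappa)%N by rewrite -{1}(expn0 2) ltn_exp2l.
have dNm : ((2^kappa).-1)%:R * d = 1.
  have e1 : (((2^kappa).-1)%:R : R) = (2^kappa)%:R - 1 by rewrite -subn1 natrB // ltnW.
  rewrite /d -e1 mulfV // pnatr_eq0; lia.
have Zqbar w : w \in A -> Z (qbar R kappa) w = c.
  rewrite inE => wn0.
  rewrite /Z (eq_bigr (fun i => ((val i != 0%N)%:R : R) * d)); last first.
    by move=> i _; rewrite /qbar; case: (_ == _); rewrite ?mul0r ?mul1r.
  by rewrite -mulr_suml sum_nat_ind card_zz.
have ZA : a <= \sum_(w in A) Z q w.
  rewrite /Z (eq_bigr (fun w => \sum_i ((zz w i)%:R * q i))); last first.
    move=> w _; rewrite big_mkcond; apply: eq_bigr => i _.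
    by case: (zz w i); rewrite ?mul1r ?mul0r.
  have aE : a = \sum_i a * q i by rewrite -mulr_sumr hq1 mulr1.
  rewrite exchange_big /= {1}aE; apply: ler_sum => i _.
  rewrite -mulr_suml; apply: (ler_wpM2r (hq0 i)).
  have := @sum_nat_ind R _ (fun w => w \in A) (fun w => zz w i); rewrite /= => ->.
  rewrite ler_nat.
  rewrite (eq_card (B := [set w : 'rV['F_2]_kappa | (w != 0) && zz w i])); last first.
    by move=> w; rewrite !inE.
  exact: card_zz2.
rewrite /lambda !sumE.
set E := expR (n%:R * (1 - c) * L).
rewrite (eq_bigr (fun=> E)); last by move=> w wA; rewrite Zqbar.
rewrite lerD2r; apply: ler_wpM2l.
  by apply: mulr_ge0; [apply: exprn_ge0; lra | rewrite invr_ge0 exprn_ge0].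
rewrite lerD2l.
have step w : E * (1 + n%:R * (c - Z q w) * L) <= expR (n%:R * (1 - Z q w) * L).
  have e : n%:R * (1 - Z q w) * L = n%:R * (1 - c) * L + n%:R * (c - Z q w) * L by ring.
  rewrite e expRD; apply: ler_wpM2l; [exact: ltW (expR_gt0 _) | exact: expR_ge1Dx].
apply: le_trans (ler_sum _ (fun w _ => step w)).
rewrite [X in _ <= X](eq_bigr (fun w => E + E * (n%:R * (c - Z q w) * L))); last first.
  by move=> w _; rewrite mulrDr mulr1.
rewrite big_split /= lerDl -mulr_sumr; apply: mulr_ge0; first exact: ltW (expR_gt0 _).
rewrite (eq_bigr (fun w => (n%:R * L) * (c - Z q w))); last by move=> w _; rewrite mulrAC.
rewrite -mulr_sumr sumrB sumr_const Nm.
have cm : c *+ (2^kappa).-1 = a by rewrite -mulr_natr /c -mulrA [d * _]mulrC dNm mulr1.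
rewrite cm.
apply: mulr_le0; first by apply: mulr_ge0_le0.
by rewrite subr_le0.
Qed.
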